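(* Let $l\in\mathbb{N}$ and for each $i\in\{1,\dots,l\}$ let $S_i$ be a countable adequate commutative partial semigroup and let $\langle y_{i,n}\rangle_{n=1}^{\infty}$ be an adequate sequence in $S_i$. Let $C$ be an $IP^{\star}$ set in $T=S_1\times\cdots\times S_l$ and let $m\in\mathbb{N}$. Then for each $i\in\{1,\dots,l\}$ there is a weak product subsystem $\langle x_{i,n}\rangle_{n=1}^{m}$ of $\langle y_{i,n}\rangle_{n=1}^{\infty}$ such that \[ FS(\langle x_{1,n}\rangle_{n=1}^{m})\times\cdots\times FS(\langle x_{l,n}\rangle_{n=1}^{m})\subseteq C . \]
   Context: A partial semigroup $(S,+)$ is a set with a map $+$ from a subset of $S\times S$ to $S$ such that $(a+b)+c=a+(b+c)$ whenever either side is defined (then both are defined and equal); it is commutative if $a+b$ is defined iff $b+a$ is, and then they are equal. For $s\in S$, $\varphi(s)=\{t: s+t\text{ defined}\}$; for finite nonempty $H\subseteq S$, $\sigma(H)=\bigcap_{s\in H}\varphi(s)$; $S$ is adequate if all $\sigma(H)\ne\emptyset$. On $T=S_1\times\cdots\times S_l$, $\bar a+\bar b$ is defined iff $a_i+b_i$ is defined for every $i$, and then equals $(a_1+b_1,\dots,a_l+b_l)$. For a partial semigroup $S$: $\beta S$ is the space of ultrafilters on $S$; $\delta S=\{p\in\beta S:\varphi(x)\in p \text{ for all } x\in S\}$; for $p,q\in\delta S$, $A\in p+q$ iff $\{x\in S: -x+A\in q\}\in p$, where $-x+A=\{y\in\varphi(x): x+y\in A\}$; this makes $\delta S$ a semigroup.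 A set $C\subseteq S$ is $IP^{\star}$ if $C\in p$ for every idempotent $p=p+p$ in $\delta S$. A sequence $\langle y_n\rangle_{n=1}^\infty$ is adequate if all finite sums $\sum_{n\in F}y_n$ are defined and for every finite nonempty $H\subseteq S$ there is $m$ with all sums $\sum_{n\in F}y_n$, $F\subseteq\{m,m+1,\dots\}$ finite nonempty, lying in $\sigma(H)$. $\langle x_n\rangle_{n=1}^{m}$ is a weak product subsystem of $\langle y_n\rangle_{n=1}^{\infty}$ if there are pairwise disjoint finite nonempty $H_1,\dots,H_m\subseteq\mathbb{N}$ with $x_n=\sum_{t\in H_n}y_t$ for each $n$. $FS(\langle x_n\rangle_{n=1}^{m})=\{\sum_{n\in F}x_n: \emptyset\ne F\subseteq\{1,\dots,m\}\}$. *)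

(* Defs.v *)
From Stdlib Require List.
From mathcomp Require Import all_boot.
Set Implicit Arguments. Unset Strict Implicit. Unset Printing Implicit Defensive.

(* A partial semigroup: carrier, definedness relation [pdef a b] ("a+b is
   defined") and a total function [padd] whose value matters only when
   [pdef a b] holds. *)
Record psg := PSG { car :> Type; pdef : car -> car -> Prop; padd : car -> car -> car }.

Section PSG.
Variable S : psg.
Local Notation D := (@pdef S).
Local Notation "a +' b" := (@padd S a b) (at level 50, left associativity).

Definition is_partial_semigroup : Prop :=
  forall a b c : S,
    ((D a b /\ D (a +' b) c) \/ (D b c /\ D a (b +' c))) ->
    D a b /\ D (a +' b) c /\ D b c /\ D a (b +' c) /\ (a +' b) +' c = a +' (b +' c).

Definition is_commutative : Prop :=
  forall a b : S, (D a b <-> D b a) /\ (D a b -> a +' b = b +' a).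

Definition phi (s : S) : S -> Prop := fun t => D s t.
Definition sigma (H : seq S) : S -> Prop := fun t => forall s, List.In s H -> phi s t.

Definition adequate : Prop :=
  forall H : seq S, H <> [::] -> exists t, sigma H t.

Definition countable_psg : Prop := exists f : S -> nat, injective f.

Fixpoint lsum (x : S) (l : seq S) : S :=
  match l with [::] => x | y :: l' => x +' lsum y l' end.
Fixpoint lsum_def (x : S) (l : seq S) : Prop :=
  match l with [::] => True | y :: l' => lsum_def y l' /\ D x (lsum y l') end.

(* finite nonempty index sets F subset of nat are represented by strictly
   increasing nonempty lists; sum_{n in F} y_n in increasing order of n *)
Definition idxset (F : seq nat) : Prop := F <> [::] /\ sorted ltn F.
Definition fsum (y : nat -> S) (F : seq nat) : S :=
  match F with [::] => y 0 | f :: F' => lsum (y f) (map y F') end.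
Definition fsum_def (y : nat -> S) (F : seq nat) : Prop :=
  match F with [::] => False | f :: F' => lsum_def (y f) (map y F') end.

Definition adequate_seq (y : nat -> S) : Prop :=
  (forall F, idxset F -> fsum_def y F) /\
  (forall H : seq S, H <> [::] -> exists m : nat,
     forall F, idxset F -> (forall n, n \in F -> m <= n) -> sigma H (fsum y F)).

Definition weak_product_subsystem (y : nat -> S) (m : nat) (x : nat -> S) : Prop :=
  exists H : nat -> seq nat,
    (forall n, n < m -> idxset (H n)) /\
    (forall n n', n < m -> n' < m -> n != n' -> forall t, t \in H n -> t \notin H n') /\
    (forall n, n < m -> fsum_def y (H n) /\ x n = fsum y (H n)).

Definition FS (x : nat -> S) (m : nat) : S -> Prop := fun s =>
  exists F, idxset F /\ (forall n, n \in F -> n < m) /\ fsum_def x F /\ s = fsum x F.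

Definition ultrafilter (p : (S -> Prop) -> Prop) : Prop :=
  p (fun _ => True) /\ ~ p (fun _ => False) /\
  (forall A B : S -> Prop, p A -> (forall x, A x -> B x) -> p B) /\
  (forall A B : S -> Prop, p A -> p B -> p (fun x => A x /\ B x)) /\
  (forall A : S -> Prop, p A \/ p (fun x => ~ A x)).

Definition in_deltaS (p : (S -> Prop) -> Prop) : Prop :=
  ultrafilter p /\ forall x : S, p (phi x).

Definition minus_translate (x : S) (A : S -> Prop) : S -> Prop :=
  fun y => phi x y /\ A (x +' y).

Definition ufadd (p q : (S -> Prop) -> Prop) : (S -> Prop) -> Prop :=
  fun A => p (fun x => q (minus_translate x A)).

Definition idempotent (p : (S -> Prop) -> Prop) : Prop :=
  forall A, ufadd p p A <-> p A.

Definition IPstar (C : S -> Prop) : Prop :=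
  forall p, in_deltaS p -> idempotent p -> p C.

End PSG.

Definition prod_psg (l : nat) (S : 'I_l -> psg) : psg :=
  @PSG (forall i, S i)
       (fun a b => forall i, pdef (a i) (b i))
       (fun a b => fun i => padd (a i) (b i)).

(* Main.v *)
From Stdlib Require List.
From mathcomp Require Import all_boot.
From mathcomp Require Import boolp classical_sets filter.
Require Import Defs.
Set Implicit Arguments. Unset Strict Implicit. Unset Printing Implicit Defensive.

Section UF.
Variable V : psg.
Implicit Types (p q r : (V -> Prop) -> Prop) (A B : V -> Prop).

Lemma uf_T p : ultrafilter p -> p (fun _ => True).
Proof. by case. Qed.
Lemma uf_nF p : ultrafilter p -> ~ p (fun _ => False).
Proof. by case=> _ []. Qed.
Lemma uf_mono p A B : ultrafilter p -> p A -> (forall x, A x -> B x) -> p B.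
Proof. by case=> _ [_ [H _]]; apply: H. Qed.
Lemma uf_and p A B : ultrafilter p -> p A -> p B -> p (fun x => A x /\ B x).
Proof. by case=> _ [_ [_ [H _]]]; apply: H. Qed.
Lemma uf_ult p A : ultrafilter p -> p A \/ p (fun x => ~ A x).
Proof. by case=> _ [_ [_ [_ H]]]; apply: H. Qed.
Lemma uf_ex p A : ultrafilter p -> p A -> exists x, A x.
Proof.
move=> u pA; apply: contrapT => N; apply: (uf_nF u); apply: (uf_mono u pA).
by move=> x Ax; apply: N; exists x.
Qed.
Lemma uf_not p A : ultrafilter p -> p A -> ~ p (fun x => ~ A x).
Proof.
move=> u pA pnA; have := uf_and u pA pnA; move/(uf_ex u) => [x [] //].
Qed.
Lemma uf_ext p X A B : ultrafilter p -> p X -> (forall x, X x -> (A x <-> B x)) ->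
  p A -> p B.
Proof.
move=> u pX H pA; apply: (uf_mono u (uf_and u pX pA)) => x [Xx Ax].
by apply/(H x Xx).
Qed.
Lemma uf_eq p q : ultrafilter p -> ultrafilter q -> (forall A, p A -> q A) -> p = q.
Proof.
move=> up uq H; apply: funext => A; apply: propext; split; first exact: H.
move=> qA; case: (uf_ult A up) => // /H qnA; exfalso; exact: (uf_not uq qA qnA).
Qed.

Lemma ufadd_uf p q : ultrafilter p -> in_deltaS q -> ultrafilter (ufadd p q).
Proof.
move=> up [uq dq]; split; last split; last split; last split.
- apply: (uf_mono up (uf_T up)) => x _; apply: (uf_mono uq (dq x)) => y.
  by rewrite /minus_translate.
- move=> H; apply: (uf_nF up); apply: (uf_mono up H) => x /(uf_ex uq) [y [] //].
- move=> A B pA AB; apply: (uf_mono up pA) => x qx; apply: (uf_mono uq qx).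
  by move=> y [Dy Ay]; split => //; exact: AB.
- move=> A B pA pB; apply: (uf_mono up (uf_and up pA pB)) => x [qa qb].
  by apply: (uf_mono uq (uf_and uq qa qb)) => y [[D1 A1] [_ B1]].
- move=> A; set X := (fun x => q (minus_translate x A)).
  case: (uf_ult X up) => [H|H]; [left|right] => //.
  apply: (uf_mono up H) => x nX; case: (uf_ult (fun y => A (padd x y)) uq) => Hq.
  + exfalso; apply: nX; apply: (uf_mono uq (uf_and uq (dq x) Hq)) => y [].
    by split.
  + apply: (uf_mono uq (uf_and uq (dq x) Hq)) => y [D1 nA]; split => //.
Qed.

Hypothesis hV : is_partial_semigroup V.

Lemma ufadd_delta p q : in_deltaS p -> in_deltaS q -> in_deltaS (ufadd p q).
Proof.
move=> [up dp] dq; split; first exact: ufadd_uf.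
move=> x; rewrite /ufadd; apply: (uf_mono up (dp x)) => a Dxa.
case: dq => uq dq; apply: (uf_mono uq (uf_and uq (dq a) (dq (padd x a)))).
move=> b [Dab Dxab]; split => //; rewrite /phi.
have := @hV x a b (or_introl (conj Dxa Dxab)); by case=> _ [_ [_ []]].
Qed.

Lemma ufadd_assoc p q r : in_deltaS p -> in_deltaS q -> in_deltaS r ->
  ufadd (ufadd p q) r = ufadd p (ufadd q r).
Proof.
move=> [up dp] [uq dq] [ur dr].
have u1 : ultrafilter (ufadd (ufadd p q) r).
  apply: ufadd_uf; [apply: ufadd_uf => // | by split].
have u2 : ultrafilter (ufadd p (ufadd q r)).
  apply: ufadd_uf => //; split; first by apply: ufadd_uf.
  by case: (@ufadd_delta q r) => //.
apply: uf_eq => // A; rewrite /ufadd => H.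
apply: (uf_mono up H) => a Ha; rewrite /minus_translate in Ha *.
apply: (uf_ext uq (dq a) _ Ha) => b Dab; split.
- move=> [_ Hr]; apply: (uf_ext ur (dr b) _ Hr) => c Dbc; split.
  + move=> [D1 A1]; have [_ [_ [_ [D2 E]]]] := @hV a b c (or_introl (conj Dab D1)).
    by split => //; split => //; rewrite -E.
  + move=> [_ [D2 A2]]; have [_ [D1 [_ [_ E]]]] := @hV a b c (or_intror (conj Dbc D2)).
    by split => //; rewrite E.
- move=> Hr; split => //; apply: (uf_ext ur (dr b) _ Hr) => c Dbc; split.
  + move=> [_ [D2 A2]]; have [_ [D1 [_ [_ E]]]] := @hV a b c (or_intror (conj Dbc D2)).
    by split => //; rewrite E.
  + move=> [D1 A1]; have [_ [_ [_ [D2 E]]]] := @hV a b c (or_introl (conj Dab D1)).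
    by split => //; split => //; rewrite -E.
Qed.


Lemma uf_all p (As : seq (V -> Prop)) : ultrafilter p ->
  (forall B, List.In B As -> p B) -> p (fun x => forall B, List.In B As -> B x).
Proof.
move=> up; elim: As => [|B As IH] H.
  by apply: (uf_mono up (uf_T up)).
have pB := H B (or_introl erefl).
have pA := IH (fun B' h => H B' (or_intror h)).
apply: (uf_mono up (uf_and up pB pA)) => x [Bx Ax] B' [<-|h] //; exact: Ax.
Qed.

Lemma uf_exists (F : (V -> Prop) -> Prop) :
  (forall As : seq (V -> Prop), (forall B, List.In B As -> F B) ->
     exists x, forall B, List.In B As -> B x) ->
  exists p, ultrafilter p /\ forall A, F A -> p A.
Proof.
move=> FIP.
pose G : set_system V := fun A => exists As : seq (V -> Prop),
  (forall B, List.In B As -> F B) /\ forall x, (forall B, List.In B As -> B x) -> A x.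
have GP : ProperFilter G.
  split.
  - move=> [As [HF Hx]]; have [x Hx'] := FIP As HF; exact: (Hx x Hx').
  - split.
    + by exists [::]; split.
    + move=> A B [As1 [H1 X1]] [As2 [H2 X2]]; exists (As1 ++ As2); split.
      * by move=> C /List.in_app_iff [] ?; [apply: H1|apply: H2].
      * move=> x Hx; split; [apply: X1|apply: X2] => C hC; apply: Hx;
        apply/List.in_app_iff; by [left|right].
    + move=> A B AB [As [H1 X1]]; exists As; split => // x /X1; exact: AB.
have [H [UH GH]] := ultraFilterLemma GP.
exists H; split; last first.
  move=> A FA; apply: GH; exists [:: A]; split; first by move=> B [<-|[]].
  by move=> x /(_ A (or_introl erefl)).
have PH : ProperFilter H := @ultra_proper _ _ UH.
split; last split; last split; last split.
- exact: filterT.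
- exact: filter_not_empty.
- move=> A B HA AB; exact: (filterS AB HA).
- move=> A B HA HB; exact: (filterI HA HB).
- move=> A; exact: in_ultra_setVsetC.
Qed.

Definition closedK (Kp : ((V -> Prop) -> Prop) -> Prop) :=
  forall r, ultrafilter r -> (forall A, r A -> exists q, Kp q /\ q A) -> Kp r.
Definition goodK (Kp : ((V -> Prop) -> Prop) -> Prop) :=
  (exists p, Kp p) /\ closedK Kp /\ (forall p, Kp p -> in_deltaS p) /\
  (forall p q, Kp p -> Kp q -> Kp (ufadd p q)).

Lemma closed_in (Kp : ((V -> Prop) -> Prop) -> Prop) r :
  closedK Kp -> (forall q, Kp q -> ultrafilter q) -> ultrafilter r ->
  (forall A, (forall q, Kp q -> q A) -> r A) -> Kp r.
Proof.
move=> cK uK ur H; apply: cK => // A rA; apply: contrapT => N.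
have : r (fun x => ~ A x).
  apply: H => q Kq; case: (uf_ult A (uK q Kq)) => // qA.
  by exfalso; apply: N; exists q.
by apply: uf_not.
Qed.

End UF.

Section Ellis.
Variable V : psg.
Hypothesis hV : is_partial_semigroup V.
Notation UF := ((V -> Prop) -> Prop).
Local Notation gd := (@goodK V).

Lemma good_uf (Kp : UF -> Prop) q : gd Kp -> Kp q -> ultrafilter q.
Proof. by move=> [_ [_ [H _]]] /H []. Qed.

Lemma minimal_good (Q : UF -> Prop) : gd Q ->
  exists M, gd M /\ (forall p, M p -> Q p) /\ (forall K, gd K -> (forall p, K p -> M p) -> forall p, M p -> K p).
Proof.
move=> gQ.
pose T := {Kp : UF -> Prop | gd Kp /\ forall p, Kp p -> Q p}.
pose R := fun s t : T => `[< forall p, sval t p -> sval s p >].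
have t0 : T := exist _ Q (conj gQ (fun p h => h)).
have [|||M HM] := @ZL_preorder T t0 R.
- by move=> t; apply/asboolP.
- by move=> r s t /asboolP H1 /asboolP H2; apply/asboolP => p /H2 /H1.
- move=> A Atot.
  case: (pselect (exists s, A s)) => [[s0 As0]|NA]; last first.
    by exists t0 => s As; exfalso; apply: NA; exists s.
  pose I := fun p => forall s : T, A s -> sval s p.
  have gI : gd I.
    split; last split; last split.
    + pose F := fun B => exists s : T, A s /\ forall q, sval s q -> q B.
      have [p [up Fp]] : exists p, ultrafilter p /\ forall B, F B -> p B.
        apply: uf_exists => As HAs.
        have [s [As' Hs]] : exists s : T, A s /\ forall B, List.In B As ->
             forall q, sval s q -> q B.
          elim: As HAs => [|B As IH] HAs.
            by exists s0; split.
          have [sB [AsB HB]] := HAs B (or_introl erefl).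
          have [s [As1 Hs]] := IH (fun B' h => HAs B' (or_intror h)).
          case: (Atot _ _ AsB As1) => /asboolP Hle.
          * exists s; split => // B' [<-|h] q hq; last exact: Hs.
            exact: (HB q (Hle q hq)).
          * exists sB; split => // B' [<-|h] q hq; first exact: HB.
            exact: (Hs B' h q (Hle q hq)).
        have [q Kq] := proj1 (proj1 (svalP s)).
        have uq := good_uf (proj1 (svalP s)) Kq.
        apply: (uf_ex uq); apply: uf_all => // B hB; exact: Hs.
      exists p => s As; apply: (closed_in (proj1 (proj2 (proj1 (svalP s))))) => //.
        by move=> q; apply: good_uf (proj1 (svalP s)).
      by move=> B HB; apply: Fp; exists s.
    + move=> r ur H s As; apply: (proj1 (proj2 (proj1 (svalP s)))) => // B rB.
      by have [q [Iq qB]] := H B rB; exists q; split => //; apply: Iq.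
    + by move=> p Ip; apply: (proj1 (proj2 (proj2 (proj1 (svalP s0))))); apply: Ip.
    + by move=> p q Ip Iq s As; apply: (proj2 (proj2 (proj2 (proj1 (svalP s))))); [apply: Ip|apply: Iq].
  have IQ : forall p, I p -> Q p by move=> p /(_ s0 As0); apply: (proj2 (svalP s0)).
  exists (exist _ I (conj gI IQ)) => s As; apply/asboolP => p Ip; exact: Ip.
- exists (sval M); split; first exact: (proj1 (svalP M)).
  split; first exact: (proj2 (svalP M)).
  move=> K gK KM; have := HM (exist _ K (conj gK (fun p h => proj2 (svalP M) p (KM p h)))).
  by move=> H; have /asboolP := H (asboolT KM).
Qed.

Lemma ellis (Q : UF -> Prop) : gd Q -> exists p : UF, Q p /\ in_deltaS p /\ ufadd p p = p.
Proof.
move=> gQ; have [M [gM [MQ minM]]] := minimal_good gQ.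
have [[p Mp] [cM [dM sM]]] := gM.
have dp := dM p Mp.
pose Kp := fun r => exists q, M q /\ r = ufadd q p.
have gK : gd Kp.
  split; last split; last split.
  - by exists (ufadd p p); exists p.
  - move=> r ur Hr.
    pose F := fun X => exists B Y, r B /\ (forall q, M q -> q Y) /\
       X = (fun x => p (minus_translate x B) /\ Y x).
    have [q' [uq' Fq']] : exists q', ultrafilter q' /\ forall X, F X -> q' X.
      apply: uf_exists => As HAs.
      have [B [Y [rB [MY HBY]]]] : exists B Y, r B /\ (forall q, M q -> q Y) /\
         forall x, p (minus_translate x B) /\ Y x -> forall X, List.In X As -> X x.
        elim: As HAs => [|X As IH] HAs.
          exists (fun _ => True), (fun _ => True); split; first exact: uf_T.
          by split => // q Mq; apply: uf_T (good_uf gM Mq).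
        have [B1 [Y1 [rB1 [MY1 ->]]]] := HAs X (or_introl erefl).
        have [B [Y [rB [MY HBY]]]] := IH (fun X' h => HAs X' (or_intror h)).
        exists (fun x => B1 x /\ B x), (fun x => Y1 x /\ Y x).
        split; first exact: uf_and.
        split; first by move=> q Mq; apply: (uf_and (good_uf gM Mq)); [apply: MY1|apply: MY].
        move=> x [Hp [Y1x Yx]] X' [<-|h].
          split => //; apply: (uf_mono dp.1 Hp) => y [D [? ?]]; by split.
        apply: HBY => //; split => //; apply: (uf_mono dp.1 Hp) => y [D [? ?]]; by split.
      have [r' [[q [Mq ->]] Hq]] := Hr B rB.
      have uq := good_uf gM Mq.
      apply: (uf_ex uq); apply: (uf_mono uq (uf_and uq Hq (MY q Mq))) => x Hx.
      exact: HBY.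
    have FY : forall Y, (forall q, M q -> q Y) -> q' Y.
      move=> Y MY.
      have H : F (fun x => p (minus_translate x (fun _ => True)) /\ Y x).
        by exists (fun _ => True), Y; split; [exact: uf_T | split].
      by apply: (uf_mono uq' (Fq' _ H)) => x [].
    have Mq' : M q' by apply: closed_in => //; move=> q; exact: good_uf gM.
    exists q'; split => //; apply: uf_eq => //.
      by apply: ufadd_uf => //; apply: (dM).
    move=> B rB; rewrite /ufadd.
    have H : F (fun x => p (minus_translate x B) /\ True).
      exists B, (fun _ => True); split; first exact: rB.
      by split; [move=> q Mq; exact: uf_T (good_uf gM Mq)|].
    by apply: (uf_mono uq' (Fq' _ H)) => x [].
  - by move=> r [q [Mq ->]]; apply: ufadd_delta => //; apply: (dM).
  - move=> r1 r2 [q1 [Mq1 ->]] [q2 [Mq2 ->]].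
    rewrite /Kp; exists (ufadd (ufadd q1 p) q2).
    have d1 : in_deltaS (ufadd q1 p) by apply: ufadd_delta => //; apply: (dM).
    split; first by apply: (sM) => //; apply: (sM).
    by rewrite [RHS]ufadd_assoc //; exact: dM.
have KM : forall r, Kp r -> M r by move=> r [q [Mq ->]]; apply: (sM).
have [q [Mq Eq]] := minM Kp gK KM p Mp.
pose L := fun q => M q /\ ufadd q p = p.
have gL : gd L.
  split; last split; last split.
  - by exists q; split.
  - move=> r ur Hr; have Mr : M r.
      apply: cM => // A rA; have [q1 [[Mq1 _] ?]] := Hr A rA; by exists q1.
    split => //; apply: uf_eq; [by apply: ufadd_uf => //; apply: (dM) | exact: dp.1 |].
    move=> B; rewrite /ufadd => rB; have [q1 [[Mq1 E1] H1]] := Hr _ rB.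
    by rewrite -E1.
  - by move=> r [Mr _]; apply: (dM).
  - move=> r1 r2 [M1 E1] [M2 E2]; split; first exact: sM.
    by rewrite ufadd_assoc ?E2 ?E1 //; apply: (dM).
have [_ Ep] := minM L gL (fun r (h : L r) => proj1 h) p Mp.
by exists p; split; [apply: MQ|split => //].
Qed.

End Ellis.

Section Comb.
Variable S : psg.
Hypothesis hS : is_partial_semigroup S.
Local Notation D := (@pdef S).
Local Notation "a +' b" := (@padd S a b) (at level 50, left associativity).

Lemma psgA (a b c : S) : (D a b /\ D (a +' b) c) <-> (D b c /\ D a (b +' c)).
Proof.
split=> H.
- by have [_ [_ [? [? _]]]] := @hS a b c (or_introl H).
- by have [? [? _]] := @hS a b c (or_intror H).
Qed.
Lemma psgE (a b c : S) : D a b -> D (a +' b) c -> (a +' b) +' c = a +' (b +' c).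
Proof. by move=> h1 h2; have [_ [_ [_ [_ ->]]]] := @hS a b c (or_introl (conj h1 h2)). Qed.

Lemma fsum_cons (f : nat -> S) a s : s != [::] ->
  (fsum_def f (a :: s) <-> fsum_def f s /\ D (f a) (fsum f s)) /\
  fsum f (a :: s) = f a +' fsum f s.
Proof. by case: s => // b t _. Qed.

Lemma fsum_cat (f : nat -> S) s1 s2 : s1 != [::] -> s2 != [::] ->
  (fsum_def f (s1 ++ s2) <-> fsum_def f s1 /\ fsum_def f s2 /\ D (fsum f s1) (fsum f s2)) /\
  (fsum_def f (s1 ++ s2) -> fsum f (s1 ++ s2) = fsum f s1 +' fsum f s2).
Proof.
elim: s1 => // a s1 IH _ n2.
case: (eqVneq s1 [::]) => [->|n1].
  have [E1 E2] := fsum_cons f a n2; rewrite cat1s.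
  have -> : fsum_def f [:: a] = True by [].
  have -> : fsum f [:: a] = f a by [].
  split; last by move=> _; rewrite E2.
  rewrite E1; split; first by move=> [? ?]; split => //; split.
  by move=> [_ [? ?]]; split.
have n12 : s1 ++ s2 != [::] by move: n1; case: (s1).
have [C1 C2] := fsum_cons f a n12; have [A1 A2] := fsum_cons f a n1.
have [I1 I2] := IH n1 n2.
rewrite cat_cons; split.
- rewrite C1 A1 I1; split.
  + move=> [[d1 [d2 d3]] d4]; rewrite (I2 (proj2 (I1) (conj d1 (conj d2 d3)))) in d4.
    have [d5 d6] := proj2 (psgA _ _ _) (conj d3 d4).
    by rewrite A2; split => //; split.
  + move=> [[d1 d5] [d2 d6]]; rewrite A2 in d6; have [d3 d4] := proj1 (psgA _ _ _) (conj d5 d6).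
    split; first by split.
    by rewrite I2 //; apply/I1.
- rewrite C1 => -[d12 da]; rewrite C2 A2 I2 //.
  have [d1 [d2 d3]] := proj1 I1 d12; rewrite (I2 d12) in da.
  have [d5 d6] := proj2 (psgA _ _ _) (conj d3 da).
  by rewrite psgE.
Qed.

Hypothesis hC : is_commutative S.

Lemma psgC (a b : S) : D a b -> D b a /\ a +' b = b +' a.
Proof. by move=> h; have [[H1 _] H2] := hC a b; split; [apply: H1|apply: H2]. Qed.

Lemma psgX (x y z : S) : D y z /\ D x (y +' z) -> D x z /\ D y (x +' z) /\
  x +' (y +' z) = y +' (x +' z).
Proof.
move=> H; have [dxy dxyz] := proj2 (psgA _ _ _) H.
have [dyx Eyx] := psgC dxy; rewrite Eyx in dxyz.
have [dxz dyxz] := proj1 (psgA _ _ _) (conj dyx dxyz).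
split => //; split => //.
by rewrite -(psgE dxy) ?Eyx ?psgE //; rewrite -Eyx.
Qed.

Lemma fsum_rem (f : nat -> S) a s : a \in s ->
  (fsum_def f s <-> fsum_def f (a :: rem a s)) /\
  (fsum_def f s -> fsum f s = fsum f (a :: rem a s)).
Proof.
elim: s => // b u IH Ha; rewrite rem_cons.
case: (eqVneq b a) => [Eb|nba]; first by rewrite Eb.
move: Ha; rewrite in_cons eq_sym (negbTE nba) orFb => Ha.
have [I1 I2] := IH Ha.
have nu : u != [::] by move: Ha; case: (u).
have [U1 U2] := fsum_cons f b nu.
case: (eqVneq (rem a u) [::]) => [Er|nr].
  rewrite Er in I1 I2 *; rewrite /= in I1 I2.
  rewrite U1 U2 (fsum_cons f a (isT : [:: b] != [::])).1.
  have [R1 R2] := fsum_cons f a (isT : [:: b] != [::]).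
  split.
  - split.
    + move=> [d1 d2]; rewrite I2 // in d2; have [d3 _] := psgC d2; by split.
    + move=> [_ d2]; have [d3 _] := psgC d2; split; first exact/I1.
      by rewrite I2 //; apply/I1.
  - move=> [d1 d2]; rewrite R2 I2 // in d2 *; have [_ ->] := psgC d2; by [].
have nbr : b :: rem a u != [::] by [].
have [B1 B2] := fsum_cons f a nbr.
have [C1 C2] := fsum_cons f b nr.
have [A1 A2] := fsum_cons f a nr.
split.
- rewrite U1 B1 C1; split.
  + move=> [d1 d2]; have d1' := proj1 I1 d1; rewrite (I2 d1) A2 in d2.
    have [d3 d4] := proj1 A1 d1'.
    have [d5 [d6 _]] := psgX (conj d4 d2).
    by rewrite C2; split => //; split.
  + move=> [[d1 d2] d3]; rewrite C2 in d3.
    have [d5 [d6 _]] := psgX (conj d2 d3).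
    have d7 : fsum_def f u by apply/I1; apply/A1; split.
    by split => //; rewrite I2 // A2.
- rewrite U1 => -[d1 d2]; have d1' := proj1 I1 d1.
  rewrite U2 B2 C2 I2 // A2; rewrite (I2 d1) A2 in d2.
  have [d3 d4] := proj1 A1 d1'.
  by have [_ [_ ->]] := psgX (conj d4 d2).
Qed.

Lemma fsum_perm (f : nat -> S) s s' : perm_eq s s' ->
  (fsum_def f s <-> fsum_def f s') /\ (fsum_def f s -> fsum f s = fsum f s').
Proof.
elim: s s' => [|a t IH] s' P.
  have -> : s' = [::] by apply/nilP; rewrite /nilp -(perm_size P).
  by split.
have Ha : a \in s' by rewrite -(perm_mem P) mem_head.
have [R1 R2] := fsum_rem f Ha.
have P' : perm_eq t (rem a s').
  by rewrite -(perm_cons a); apply: (perm_trans P); apply: perm_to_rem.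
have [I1 I2] := IH _ P'.
case: (eqVneq t [::]) => [Et|nt].
  have : rem a s' = [::] by move: (perm_size P'); rewrite Et; case: (rem a s').
  move=> Er; rewrite Et; rewrite Er in R1 R2.
  by split; [rewrite R1|move=> _; rewrite R2 //; apply/R1].
have nr : rem a s' != [::] by move: (perm_size P') nt; case: (t) => // ? ?; case: (rem a s').
have [T1 T2] := fsum_cons f a nt; have [Q1 Q2] := fsum_cons f a nr.
split.
- rewrite R1 T1 Q1; split => -[d1 d2].
  + by rewrite -I2 //; split => //; apply/I1.
  + have d1' := proj2 I1 d1; by rewrite I2.
- move=> d; rewrite R2; last by apply/R1; apply/Q1; have [d1 d2] := proj1 T1 d;
    split; [apply/I1|rewrite -I2].
  by rewrite T2 Q2 I2 //; exact: (proj1 (proj1 T1 d)).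
Qed.


Lemma fsum_flat (f : nat -> S) (h : nat -> seq nat) G : G != [::] ->
  (forall j, j \in G -> h j != [::]) -> fsum_def f (flatten (map h G)) ->
  fsum_def (fun j => fsum f (h j)) G /\
  fsum (fun j => fsum f (h j)) G = fsum f (flatten (map h G)).
Proof.
elim: G => // j G IH _ Hh.
case: (eqVneq G [::]) => [->|nG].
  by rewrite /= cats0.
have nhj : h j != [::] by apply: Hh; rewrite mem_head.
have nrest : flatten (map h G) != [::].
  move: nG Hh; case: (G) => // j' G' _ Hh /=.
  have : h j' != [::] by apply: Hh; rewrite in_cons mem_head orbT.
  by case: (h j').
have Hh' : forall j', j' \in G -> h j' != [::].
  by move=> j' hj'; apply: Hh; rewrite in_cons hj' orbT.
have -> : flatten (map h (j :: G)) = h j ++ flatten (map h G) by [].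
move=> d.
have [C1 C2] := fsum_cat f nhj nrest.
have [d1 [d2 d3]] := proj1 C1 d.
have [I1 I2] := IH nG Hh' d2.
have [G1 G2] := fsum_cons (fun j => fsum f (h j)) j nG.
split; first by apply/G1; split => //; rewrite I2.
by rewrite G2 C2 // I2.
Qed.

Lemma sort_idx (F : seq nat) : uniq F -> F != [::] ->
  idxset (sort leq F) /\ perm_eq (sort leq F) F.
Proof.
move=> uF nF; have P : perm_eq (sort leq F) F by rewrite perm_sort.
split => //; split.
  by move=> E; move: (perm_size P); rewrite E; case: (F) nF.
by rewrite ltn_sorted_uniq_leq sort_uniq uF sort_sorted //; exact: leq_total.
Qed.

Lemma ad_def (Y : nat -> S) : adequate_seq Y ->
  forall F, uniq F -> F != [::] -> fsum_def Y F.
Proof.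
move=> [A1 _] F uF nF; have [I P] := sort_idx uF nF.
by apply/(proj1 (fsum_perm Y P)); apply: A1.
Qed.

Lemma ad_ev (Y : nat -> S) : adequate_seq Y -> forall h : S,
  exists M, forall F, uniq F -> F != [::] -> (forall n, n \in F -> M <= n) ->
    D h (fsum Y F).
Proof.
move=> [A1 A2] h; have [M HM] := A2 [:: h] (fun E => ltac:(discriminate E)).
exists M => F uF nF HF; have [I P] := sort_idx uF nF.
have HF' : forall n, n \in sort leq F -> M <= n.
  by move=> n hn; apply: HF; rewrite -(perm_mem P).
have := HM _ I HF' h (or_introl erefl).
by rewrite /phi (proj2 (fsum_perm Y P)) //; apply: A1.
Qed.

End Comb.

Definition gprod (I : Type) (W : I -> psg) : psg :=
  @PSG (forall i, W i) (fun a b => forall i, pdef (a i) (b i))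
       (fun a b => fun i => padd (a i) (b i)).

Lemma gprod_psg (I : Type) (W : I -> psg) :
  (forall i, is_partial_semigroup (W i)) -> is_partial_semigroup (gprod W).
Proof.
move=> H a b c Hor.
have Hi : forall i, pdef (a i) (b i) /\ pdef (padd (a i) (b i)) (c i) /\
    pdef (b i) (c i) /\ pdef (a i) (padd (b i) (c i)) /\
    padd (padd (a i) (b i)) (c i) = padd (a i) (padd (b i) (c i)).
  move=> i; apply: (@H i (a i) (b i) (c i)).
  by case: Hor => -[h1 h2]; [left|right]; split.
split; first by move=> i; case: (Hi i).
split; first by move=> i; case: (Hi i) => _ [].
split; first by move=> i; case: (Hi i) => _ [_ []].
split; first by move=> i; case: (Hi i) => _ [_ [_ []]].
apply: functional_extensionality_dep => i; case: (Hi i) => _ [_ [_ [_ E]]]; exact: E.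
Qed.

Lemma lsum_gprod (I : Type) (W : I -> psg) (x : gprod W) (s : seq (gprod W)) i :
  (lsum_def x s -> lsum_def (x i) (map (fun w => w i) s)) /\
  lsum x s i = lsum (x i) (map (fun w => w i) s).
Proof.
elim: s x => [|w s IH] x //=; have [I1 I2] := IH w.
by split; [move=> [d1 d2]; split; [apply: I1|rewrite -I2; apply: d2] | rewrite I2].
Qed.

Lemma fsum_gprod (I : Type) (W : I -> psg) (z : nat -> gprod W) G i :
  (fsum_def z G -> fsum_def (fun j => z j i) G) /\
  fsum z G i = fsum (fun j => z j i) G.
Proof.
case: G => [|g G] //=; have [I1 I2] := lsum_gprod (z g) (map z G) i.
by rewrite -map_comp in I1 I2.
Qed.

Section Proj.
Variables (K : Type) (T : psg).
Local Notation U := (gprod (fun _ : K => T)).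

Definition projf (k : K) (u : (U -> Prop) -> Prop) : (T -> Prop) -> Prop :=
  fun A => u (fun v => A (v k)).

Lemma proj_uf k u : ultrafilter u -> ultrafilter (projf k u).
Proof.
move=> uu; split; last split; last split; last split.
- exact: (uf_T uu).
- exact: (uf_nF uu).
- by move=> A B hA AB; apply: (uf_mono uu hA) => v; apply: AB.
- by move=> A B hA hB; apply: (uf_and uu hA hB).
- by move=> A; case: (uf_ult (fun v : U => A (v k)) uu) => h; [left|right].
Qed.

Lemma proj_delta k u : in_deltaS u -> in_deltaS (projf k u).
Proof.
move=> [uu du]; split; first exact: proj_uf.
move=> x; apply: (uf_mono uu (du (fun _ => x))) => v; exact.
Qed.

Lemma proj_idem k u : in_deltaS u -> ufadd u u = u -> idempotent (projf k u).
Proof.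
move=> [uu du] E A; rewrite /ufadd /projf.
have -> : u (fun v => A (v k)) = ufadd u u (fun v => A (v k)) by rewrite E.
rewrite /ufadd /minus_translate /phi; split => H.
- apply: (uf_mono uu H) => v Hv; apply: (uf_mono uu (uf_and uu (du v) Hv)).
  by move=> w [d [_ a]].
- apply: (uf_mono uu H) => v Hv; apply: (uf_mono uu (uf_and uu (du v) Hv)).
  by move=> w [d [_ a]]; split.
Qed.

End Proj.

Lemma uf_seq (V : psg) (Kt : eqType) (u : (V -> Prop) -> Prop) (A : Kt -> V -> Prop) (ks : seq Kt) :
  ultrafilter u -> (forall k, u (A k)) -> u (fun v => forall k, k \in ks -> A k v).
Proof.
move=> uu H; elim: ks => [|k ks IH].
  by apply: (uf_mono uu (uf_T uu)).
apply: (uf_mono uu (uf_and uu (H k) IH)) => v [h1 h2] k'.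
by rewrite in_cons => /orP [/eqP ->|/h2].
Qed.

Lemma ev_fin (X : finType) (Pr : X -> nat -> Prop) :
  (forall a, exists J, forall j, J <= j -> Pr a j) ->
  exists J, forall j, J <= j -> forall a, Pr a j.
Proof.
move=> H; have [Jf HJ] := choice H.
exists (\max_(a : X) Jf a) => j hj a; apply: HJ.
by apply: leq_trans hj; apply: leq_bigmax.
Qed.

Lemma ev_list (V : Type) (Pr : V -> nat -> Prop) (As : seq V) :
  (forall a, List.In a As -> exists J, forall j, J <= j -> Pr a j) ->
  exists J, forall j, J <= j -> forall a, List.In a As -> Pr a j.
Proof.
elim: As => [|a As IH] H; first by exists 0.
have [J1 H1] := H a (or_introl erefl).
have [J2 H2] := IH (fun b h => H b (or_intror h)).
exists (maxn J1 J2) => j hj b [<-|h].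
  by apply: H1; apply: leq_trans hj; apply: leq_maxl.
by apply: H2 => //; apply: leq_trans hj; apply: leq_maxr.
Qed.

Lemma leq_sumn_mem (G : seq nat) j : j \in G -> j <= sumn G.
Proof.
elim: G => // g G IH; rewrite in_cons => /orP [/eqP ->|h] /=; first exact: leq_addr.
by apply: leq_trans (IH h) _; apply: leq_addl.
Qed.

Section Main.
Variables (l : nat) (S : 'I_l -> psg).
Hypothesis hpsg : forall i, is_partial_semigroup (S i).
Hypothesis hcomm : forall i, is_commutative (S i).
Variable y : forall i, nat -> S i.
Hypothesis hy : forall i, adequate_seq (y i).
Variable m : nat.
Hypothesis hm : 0 < m.

Local Notation T := (prod_psg S).
Definition PI := {ffun 'I_l -> {set 'I_m}}.
Local Notation U := (gprod (fun _ : PI => T)).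

Definition Lf (k : PI) (i : 'I_l) : seq nat :=
  if [seq val j | j <- enum (k i)] is [::] then [:: 0] else [seq val j | j <- enum (k i)].

Definition zz (j : nat) : U := fun k i => fsum (y i) [seq j * m + n | n <- Lf k i].

Lemma Lf_prop k i : [/\ uniq (Lf k i), Lf k i != [::] & forall n, n \in Lf k i -> n < m].
Proof.
rewrite /Lf; case E: [seq val j | j <- enum (k i)] => [|a s].
  by split => // n; rewrite inE => /eqP ->.
split => //.
- by rewrite -E map_inj_uniq ?enum_uniq //; exact: val_inj.
- move=> n; rewrite -E => /mapP [j _ ->]; exact: ltn_ord.
Qed.

Lemma blk_uniq j L : uniq L -> uniq [seq j * m + n | n <- L].
Proof. by move=> uL; rewrite map_inj_uniq // => a b /eqP; rewrite eqn_add2l => /eqP. Qed.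

Lemma modB j n : n < m -> (j * m + n) %% m = n.
Proof. by move=> h; rewrite modnMDl modn_small. Qed.

Lemma ap_uniq (G L : seq nat) : uniq G -> uniq L -> (forall n, n \in L -> n < m) ->
  uniq [seq j * m + n | j <- G, n <- L].
Proof.
move=> uG uL HL; apply: allpairs_uniq => // [[j n] [j' n']] /allpairsP [[a b] /= [ha hb [-> ->]]]
  /allpairsP [[a' b'] /= [ha' hb' [-> ->]]] /= E.
have E2 : b = b' by rewrite -(modB a (HL _ hb)) -(modB a' (HL _ hb')) E.
by move: E; rewrite E2 => /eqP; rewrite eqn_add2r eqn_pmul2r // => /eqP ->.
Qed.

Lemma ap_uniq' (G L : seq nat) : uniq G -> uniq L -> (forall n, n \in L -> n < m) ->
  uniq [seq j * m + n | n <- L, j <- G].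
Proof.
move=> uG uL HL; apply: allpairs_uniq => // [[n j] [n' j']] /allpairsP [[a b] /= [ha hb [-> ->]]]
  /allpairsP [[a' b'] /= [ha' hb' [-> ->]]] /= E.
have E2 : a = a' by rewrite -(modB b (HL _ ha)) -(modB b' (HL _ ha')) E.
by move: E; rewrite E2 => /eqP; rewrite eqn_add2r eqn_pmul2r // => /eqP ->.
Qed.


Lemma hT : is_partial_semigroup T.
Proof. exact: (gprod_psg hpsg). Qed.
Lemma hU : is_partial_semigroup U.
Proof. exact: (gprod_psg (fun _ => hT)). Qed.

Definition FSt (j0 : nat) (v : U) : Prop := exists G, idxset G /\
  (forall j, j \in G -> j0 <= j) /\ fsum_def zz G /\ v = fsum zz G.
Definition Qz (p : (U -> Prop) -> Prop) := in_deltaS p /\ forall j0, p (FSt j0).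

Lemma zz_ev (x : U) : exists J, forall j, J <= j -> phi x (zz j).
Proof.
suff [J HJ] : exists J, forall j, J <= j -> forall k, forall i, pdef (x k i) (zz j k i).
  by exists J => j hj k i; apply: HJ.
apply: ev_fin => k; apply: ev_fin => i.
have [M HM] := ad_ev (@hpsg i) (@hcomm i) (@hy i) (x k i).
exists M => j hj; have [u1 n1 l1] := Lf_prop k i.
apply: HM; first exact: blk_uniq.
  by move: n1; case: (Lf k i).
move=> n /mapP [a _ ->]; apply: leq_trans hj _; apply: leq_trans (leq_addr _ _).
exact: leq_pmulr.
Qed.

Lemma zz_FS j0 j : j0 <= j -> FSt j0 (zz j).
Proof.
move=> h; exists [:: j]; split; first by split.
by split; [move=> a; rewrite inE => /eqP -> | split].
Qed.

Lemma sorted_cat_lt (G G' : seq nat) : sorted ltn G -> sorted ltn G' ->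
  (forall a b, a \in G -> b \in G' -> a < b) -> sorted ltn (G ++ G').
Proof.
case: G => [|g G1] //= sG sG' H; rewrite cat_path sG /=.
case: G' sG' H => [|h G2] //= sG' H; rewrite sG' andbT.
by apply: H; [exact: mem_last|exact: mem_head].
Qed.

Lemma gdQ : goodK Qz.
Proof.
split; last split; last split.
- pose F := fun X : U -> Prop => (exists x, X = phi x) \/ (exists j0, X = FSt j0).
  have [p [up Fp]] : exists p, ultrafilter p /\ forall X, F X -> p X.
    apply: uf_exists => As HAs.
    have [J HJ] : exists J, forall j, J <= j -> forall X, List.In X As -> X (zz j).
      apply: ev_list => X /HAs [[x ->]|[j0 ->]]; first exact: zz_ev.
      by exists j0 => j hj; apply: zz_FS.
    by exists (zz J); apply: HJ.
  exists p; split; first by split => // x; apply: Fp; left; exists x.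
  by move=> j0; apply: Fp; right; exists j0.
- move=> r ur H; split; first split => //.
    move=> x; case: (uf_ult (phi x) ur) => // hn; exfalso.
    have [q [[[uq dq] _] hq]] := H _ hn; exact: (uf_not uq (dq x) hq).
  move=> j0; case: (uf_ult (FSt j0) ur) => // hn; exfalso.
  have [q [[[uq dq] Fq] hq]] := H _ hn; exact: (uf_not uq (Fq j0) hq).
- by move=> p [].
- move=> p q [dp Fp] [dq Fq]; split; first exact: (ufadd_delta hU).
  move=> j0; rewrite /ufadd; apply: (uf_mono dp.1 (Fp j0)).
  move=> a [G [[nG sG] [HG [dG ->]]]].
  set j1 := (sumn G).+1.
  apply: (uf_mono dq.1 (uf_and dq.1 (dq.2 (fsum zz G)) (Fq j1))).
  move=> b [Dab [G' [[nG' sG'] [HG' [dG' Eb]]]]]; subst b; split; first exact: Dab.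
  have nG1 : G != [::] by apply/eqP.
  have nG1' : G' != [::] by apply/eqP.
  have [C1 C2] := fsum_cat hU zz nG1 nG1'.
  have dc : fsum_def zz (G ++ G') by apply/C1; split => //; split.
  exists (G ++ G'); split; last split; last split => //; last by rewrite C2.
  + split; first by case: (G) nG.
    apply: sorted_cat_lt => // a0 b0 ha hb; apply: leq_trans (HG' b0 hb).
    by rewrite ltnS; apply: leq_sumn_mem.
  + move=> j; rewrite mem_cat => /orP [/HG //|hj].
    have [g hg] : exists g, g \in G by case: (G) nG => // g ? _; exists g; exact: mem_head.
    apply: leq_trans (HG g hg) _; apply: leq_trans (leq_sumn_mem hg) _.
    by apply: ltnW; apply: HG'.
Qed.


Variable C : T -> Prop.
Hypothesis hC : IPstar C.

Lemma main_G : exists G, idxset G /\ fsum_def zz G /\ forall k, C (fsum zz G k).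
Proof.
have [u [[du Fu] [du' Eu]]] := ellis hU gdQ.
have hCk : forall k, u (fun v : U => C (v k)).
  move=> k; exact: (@hC _ (proj_delta k du) (proj_idem k du Eu)).
have := uf_and du.1 (Fu 0) (uf_seq (enum PI) du.1 hCk).
move=> /(uf_ex du.1) [v [[G [IG [_ [dG Ev]]]] Hv]].
exists G; split => //; split => // k; rewrite -Ev; apply: Hv; exact: mem_enum.
Qed.

End Main.

Lemma Lf_set l m (k : PI l m) i (F : seq nat) : k i = [set j : 'I_m | val j \in F] ->
  (forall n, n \in F -> n < m) -> F != [::] -> Lf k i =i F.
Proof.
move=> Ek HF nF.
have memL : [seq val j | j <- enum (k i)] =i F.
  move=> n; apply/mapP/idP.
  - by move=> [j]; rewrite mem_enum Ek inE => h ->.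
  - move=> hn; exists (Ordinal (HF n hn)) => //; by rewrite mem_enum Ek inE.
rewrite /Lf; case E: [seq val j | j <- enum (k i)] => [|a s]; last by rewrite -E.
exfalso; move: nF; case: (F) memL => // n F' memL _.
by have := memL n; rewrite E mem_head.
Qed.

Theorem theorem11 (l : nat) (S : 'I_l -> psg)
  (hl : 0 < l)
  (hpsg : forall i, is_partial_semigroup (S i))
  (hcomm : forall i, is_commutative (S i))
  (hcount : forall i, countable_psg (S i))
  (hadeq : forall i, adequate (S i))
  (y : forall i, nat -> S i)
  (hy : forall i, adequate_seq (y i))
  (C : prod_psg S -> Prop)
  (hC : IPstar C)
  (m : nat) (hm : 0 < m) :
  exists x : forall i, nat -> S i,
    (forall i, weak_product_subsystem (y i) m (x i)) /\
    (forall i F, idxset F -> (forall n, n \in F -> n < m) -> fsum_def (x i) F) /\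
    (forall (t : prod_psg S), (forall i, FS (x i) m (t i)) -> C t).
Proof.
have [G [[nG sG] [dG HC]]] := main_G hpsg hcomm hy hm hC.
have uG : uniq G := sorted_uniq ltn_trans ltnn sG.
have nG' : G != [::] by apply/eqP.
have injB : forall n, injective (fun j => j * m + n).
  by move=> n a b /eqP; rewrite eqn_add2r eqn_pmul2r // => /eqP.
exists (fun i n => fsum (y i) [seq j * m + n | j <- G]).
split; last split.
- move=> i; exists (fun n => [seq j * m + n | j <- G]); split; last split.
  + move=> n _; split; first by move: nG; case: (G).
    rewrite sorted_map; apply: sub_sorted sG => a b /= h.
    by rewrite ltn_add2r ltn_pmul2r.
  + move=> n n' hn hn' nn' t /mapP [j _ ->]; apply/negP => /mapP [j' _ E].
    move: nn'; have := modB j hn; rewrite E modB // => ->; by rewrite eqxx.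
  + move=> n hn; split => //; apply: (ad_def (@hpsg i) (@hcomm i) (@hy i)).
      by rewrite map_inj_uniq.
    by move: nG; case: (G).
- move=> i F [nF sF] HF.
  have uF : uniq F := sorted_uniq ltn_trans ltnn sF.
  have nF' : F != [::] by apply/eqP.
  have := @fsum_flat _ (@hpsg i) (y i) (fun n => [seq j * m + n | j <- G]) F nF'.
  move=> H; apply: (proj1 (H _ _)).
    by move=> n _; move: nG; case: (G).
  apply: (ad_def (@hpsg i) (@hcomm i) (@hy i)); first exact: ap_uniq'.
  by move: nF nG; case: (F) => // a F1 _; case: (G).
- move=> t Ht.
  have [Ff HF] := choice Ht.
  pose k : PI l m := [ffun i => [set j : 'I_m | val j \in Ff i]].
  suff <- : fsum (zz y (m:=m)) G k = t by apply: HC.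
  apply: functional_extensionality_dep => i.
  have [[nFi sFi] [HFi [dFi Eti]]] := HF i.
  have uFi : uniq (Ff i) := sorted_uniq ltn_trans ltnn sFi.
  have nFi' : Ff i != [::] by apply/eqP.
  have E1 := (@fsum_gprod _ (fun _ : PI l m => prod_psg S) (zz y (m:=m)) G k).2.
  have E2 := (@fsum_gprod _ S (fun j => zz y (m:=m) j k) G i).2.
  have -> : fsum (zz y (m:=m)) G k i = fsum (fun j => zz y (m:=m) j k i) G.
    by rewrite E1; exact: E2.
  rewrite Eti /zz.
  have [u1 n1 l1] := Lf_prop hm k i.
  have LF : Lf k i =i Ff i by apply: Lf_set => //; rewrite ffunE.
  have uA : uniq [seq j * m + n | j <- G, n <- Lf k i] by apply: ap_uniq.
  have uB : uniq [seq j * m + n | n <- Ff i, j <- G] by apply: ap_uniq'.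
  have nA : [seq j * m + n | j <- G, n <- Lf k i] != [::].
    by move: nG n1; case: (G) => // a G1 _; case: (Lf k i).
  have nB : [seq j * m + n | n <- Ff i, j <- G] != [::].
    by move: nFi nG; case: (Ff i) => // a F1 _; case: (G).
  have dA := ad_def (@hpsg i) (@hcomm i) (@hy i) uA nA.
  have dB := ad_def (@hpsg i) (@hcomm i) (@hy i) uB nB.
  have PAB : perm_eq [seq j * m + n | j <- G, n <- Lf k i] [seq j * m + n | n <- Ff i, j <- G].
    apply: uniq_perm => // w; apply/allpairsP/allpairsP => -[[a b] /= [ha hb ->]].
      by exists (b, a); rewrite /= -LF.
    by exists (b, a); rewrite /= LF.
  have [F1 F2] := @fsum_flat _ (@hpsg i) (y i) (fun j => [seq j * m + n | n <- Lf k i]) G nG'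
    (fun j _ => ltac:(by move: n1; case: (Lf k i))) dA.
  have [H1 H2] := @fsum_flat _ (@hpsg i) (y i) (fun n => [seq j * m + n | j <- G]) (Ff i) nFi'
    (fun j _ => ltac:(by move: nG; case: (G))) dB.
  rewrite F2 H2; exact: (proj2 (fsum_perm (@hpsg i) (@hcomm i) (y i) PAB) dA).
Qed.
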